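(* Let $f:\mathbb{R}^n\to\mathbb{R}$ be continuously differentiable and bounded below with $\nabla f$ Lipschitz continuous on $\mathbb{R}^n$, let $s$ be an integer with $0<s<n$, and let $\{\mathbf{x}^k\}$ be the sequence generated by the greedy sparse-simplex method. Then any accumulation point $\mathbf{x}^*$ of $\{\mathbf{x}^k\}$ is an $L_2(f)$-stationary point of the problem (P): minimize $f(\mathbf{x})$ subject to $\|\mathbf{x}\|_0\le s$; i.e. $\nabla_i f(\mathbf{x}^* )=0$ for $i\in I_1(\mathbf{x}^* )$ and $|\nabla_i f(\mathbf{x}^* )|\le L_2(f)M_s(\mathbf{x}^* )$ for $i\in I_0(\mathbf{x}^* )$.
   Context: $\|\mathbf{x}\|_0$ is the number of nonzero components, $C_s=\{\mathbf{x}:\|\mathbf{x}\|_0\le s\}$, $I_1(\mathbf{x})=\{i:x_i\neq0\}$, $I_0(\mathbf{x})=\{i:x_i=0\}$, $M_s(\mathbf{x})$ the $s$-th largest absolute value among components of $\mathbf{x}$, $\mathbf{e}_i$ the $i$-th standard basis vector. For $i\neq j$, $\nabla_{i,j}f(\mathbf{x})\in\mathbb{R}^2$ is the vector of the $i$-th and $j$-th partial derivatives, $L_{i,j}(f)$ is a constant with $\|\nabla_{i,j}f(\mathbf{x})-\nabla_{i,j}f(\mathbf{x}+\mathbf{d})\|\le L_{i,j}(f)\|\mathbf{d}\|$ for all $\mathbf{x}$ and all $\mathbf{d}$ with at most two nonzero components, and $L_2(f)=\max_{i\neq j}L_{i,j}(f)$. Greedy sparse-simplex method (all one-dimensional minima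 assumed attained): choose $\mathbf{x}^0\in C_s$. At step $k$: if $\|\mathbf{x}^k\|_0<s$, for each $i$ let $t_i\in\operatorname{argmin}_t f(\mathbf{x}^k+t\mathbf{e}_i)$, $f_i=\min_t f(\mathbf{x}^k+t\mathbf{e}_i)$, $i_k\in\operatorname{argmin}_i f_i$; if $f_{i_k}<f(\mathbf{x}^k)$ set $\mathbf{x}^{k+1}=\mathbf{x}^k+t_{i_k}\mathbf{e}_{i_k}$, else stop. If $\|\mathbf{x}^k\|_0=s$, for $i\in I_1(\mathbf{x}^k)$, $j=1,\dots,n$ let $t_{i,j}\in\operatorname{argmin}_t f(\mathbf{x}^k-x_i^k\mathbf{e}_i+t\mathbf{e}_j)$, $f_{i,j}$ the minimum value, $(i_k,j_k)\in\operatorname{argmin}f_{i,j}$; if $f_{i_k,j_k}<f(\mathbf{x}^k)$ set $\mathbf{x}^{k+1}=\mathbf{x}^k-x^k_{i_k}\mathbf{e}_{i_k}+t_{i_k,j_k}\mathbf{e}_{j_k}$, else stop. *)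

(* Defs.v *)
From HB Require Import structures.
From mathcomp Require Import all_boot all_order all_algebra.
From mathcomp Require Import all_classical all_reals all_analysis.
Set Implicit Arguments. Unset Strict Implicit. Unset Printing Implicit Defensive.
Import Order.TTheory GRing.Theory Num.Theory.
Import numFieldNormedType.Exports.
Local Open Scope ring_scope.

Section Defs.
Variables (R : realType) (n : nat).
Implicit Types (x y d : 'rV[R]_n) (f : 'rV[R]_n -> R).

Definition evec (i : 'I_n) : 'rV[R]_n := delta_mx 0 i.

Definition l0 x : nat := #|[pred i : 'I_n | x 0 i != 0]|.

Definition enorm x : R := Num.sqrt (\sum_(i < n) x 0 i ^+ 2).

Definition Ms (s : nat) x : R :=
  nth 0 (sort (fun a b : R => b <= a) [seq `|x 0 i| | i <- enum 'I_n]) s.-1.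

Definition partial f (i : 'I_n) x : R := 'D_(evec i) f x.

Definition grad f x : 'rV[R]_n := \row_(i < n) partial f i x.

Definition norm_grad_ij_diff f (i j : 'I_n) x y : R :=
  Num.sqrt ((partial f i x - partial f i y) ^+ 2 + (partial f j x - partial f j y) ^+ 2).

(* L2 bounds every block-Lipschitz constant L_{i,j}(f), i.e. L2 >= max_{i<>j} L_{i,j}(f) *)
Definition L2_bound f (L2 : R) : Prop :=
  forall i j : 'I_n, i != j -> forall x d, (l0 d <= 2)%N ->
    norm_grad_ij_diff f i j x (x + d) <= L2 * enorm d.

(* one iteration of the greedy sparse-simplex method (or termination, after
   which the iterate stays put) *)
Definition greedy_step f (s : nat) x x' : Prop :=
  if (l0 x < s)%N then
    (exists (i : 'I_n) (t : R),
        (forall t' : R, f (x + t *: evec i) <= f (x + t' *: evec i)) /\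
        (forall (j : 'I_n) (t' : R), f (x + t *: evec i) <= f (x + t' *: evec j)) /\
        f (x + t *: evec i) < f x /\
        x' = x + t *: evec i)
    \/ ((forall (i : 'I_n) (t : R), f x <= f (x + t *: evec i)) /\ x' = x)
  else
    (exists (i j : 'I_n) (t : R), x 0 i != 0 /\
        (forall t' : R, f (x - x 0 i *: evec i + t *: evec j)
                        <= f (x - x 0 i *: evec i + t' *: evec j)) /\
        (forall (i' j' : 'I_n) (t' : R), x 0 i' != 0 ->
            f (x - x 0 i *: evec i + t *: evec j)
            <= f (x - x 0 i' *: evec i' + t' *: evec j')) /\
        f (x - x 0 i *: evec i + t *: evec j) < f x /\
        x' = x - x 0 i *: evec i + t *: evec j)
    \/ ((forall (i j : 'I_n) (t : R), x 0 i != 0 ->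
            f x <= f (x - x 0 i *: evec i + t *: evec j)) /\ x' = x).

Definition greedy_seq f (s : nat) (xs : nat -> 'rV[R]_n) : Prop :=
  (l0 (xs 0%N) <= s)%N /\ forall k, greedy_step f s (xs k) (xs k.+1).

Definition accumulation_point (xs : nat -> 'rV[R]_n) xstar : Prop :=
  forall e : R, 0 < e -> forall N : nat, exists k : nat,
    (N <= k)%N /\ enorm (xs k - xstar) < e.

Definition L_stationary f (s : nat) (L : R) x : Prop :=
  forall i : 'I_n,
    (x 0 i != 0 -> partial f i x = 0) /\
    (x 0 i = 0 -> `|partial f i x| <= L * Ms s x).

End Defs.

(* Main.v *)
Require Import Defs.
From mathcomp Require Import all_boot all_order all_algebra.
From mathcomp Require Import all_classical all_reals all_analysis.
From mathcomp Require Import ring lra.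
Import Order.TTheory GRing.Theory Num.Theory.
Import numFieldNormedType.Exports.
Local Open Scope ring_scope.

Lemma evecE (R : realType) n (i k : 'I_n) : evec R i 0 k = (k == i)%:R.
Proof. by rewrite /evec mxE eqxx. Qed.

Lemma evec2E (R : realType) n (i j k : 'I_n) (a b : R) :
  (a *: evec R i + b *: evec R j) 0 k = a * (k == i)%:R + b * (k == j)%:R.
Proof. by rewrite /evec !mxE eqxx. Qed.

Lemma coord_le_enorm (R : realType) n (x : 'rV[R]_n) i : `|x 0 i| <= enorm x.
Proof.
rewrite /enorm -(sqrtr_sqr (x 0 i)) ler_sqrt; last first.
  by rewrite sumr_ge0 // => k _; rewrite sqr_ge0.
by rewrite (bigD1 i) //= lerDl sumr_ge0 // => k _; rewrite sqr_ge0.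
Qed.

Lemma norm_le_enorm (R : realType) n (x : 'rV[R]_n) : `|x| <= enorm x.
Proof.
rewrite [leLHS]/Num.Def.normr /= mx_normrE.
apply: bigmax_le; first by rewrite /enorm sqrtr_ge0.
case=> a b _ /=; rewrite (ord1 a); exact: coord_le_enorm.
Qed.

Lemma enorm2 (R : realType) n (i j : 'I_n) (a b : R) : i != j ->
  enorm (a *: evec R i + b *: evec R j) = Num.sqrt (a ^+ 2 + b ^+ 2).
Proof.
move=> ij; rewrite /enorm; congr Num.sqrt.
rewrite (bigD1 i) //= (bigD1 j) 1?eq_sym //= big1; last first.
  move=> k /andP[ki kj]; rewrite evec2E (negbTE ki) (negbTE kj).
  by rewrite !mulr0 addr0 expr0n.
rewrite !evec2E !eqxx (negbTE ij) (eq_sym j i) (negbTE ij) /=; ring.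
Qed.

Lemma l0_2 (R : realType) n (i j : 'I_n) (a b : R) :
  (l0 (a *: evec R i + b *: evec R j) <= 2)%N.
Proof.
have sub : [pred k | (a *: evec R i + b *: evec R j) 0 k != 0] \subset [set i; j].
  apply/fintype.subsetP => k; rewrite !inE evec2E.
  by case: (k == i); case: (k == j); rewrite ?mulr0 ?addr0 ?eqxx //= orbT.
apply: leq_trans (subset_leq_card sub) _.
by rewrite cards2; case: (i != j).
Qed.

Lemma alg_bound (R : realType) (g L a : R) : 0 <= L ->
  (forall t, 0 <= t * g + L / 2 * (a ^+ 2 + t ^+ 2)) -> `|g| <= L * `|a|.
Proof.
move=> L0 H.
suff h2 : g ^+ 2 <= L ^+ 2 * a ^+ 2.
  have : `|g| ^+ 2 <= (L * `|a|) ^+ 2 by rewrite exprMn !real_normK ?num_real.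
  by rewrite ler_sqr // ?nnegrE ?mulr_ge0.
case: (eqVneq L 0) => [L00|Ln0].
  have := H (- g); rewrite L00 mul0r mul0r addr0 mulNr oppr_ge0 -expr2 => h.
  by rewrite expr0n /= mul0r.
have Lp : 0 < L by rewrite lt_def Ln0.
have := H (- g / L).
have -> : - g / L * g + L / 2 * (a ^+ 2 + (- g / L) ^+ 2) =
   (L ^+ 2 * a ^+ 2 - g ^+ 2) / (2 * L) by field; rewrite Ln0.
by rewrite pmulr_lge0 ?subr_ge0 // invr_gt0 mulr_gt0.
Qed.

Lemma cs2 (R : realType) (a b A B : R) :
  a * A + b * B <= Num.sqrt (a ^+ 2 + b ^+ 2) * Num.sqrt (A ^+ 2 + B ^+ 2).
Proof.
rewrite -sqrtrM ?addr_ge0 ?sqr_ge0 //.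
apply: le_trans (ler_norm _) _.
rewrite -sqrtr_sqr ler_sqrt ?mulr_ge0 ?addr_ge0 ?sqr_ge0 //.
rewrite -subr_ge0.
have -> : (a ^+ 2 + b ^+ 2) * (A ^+ 2 + B ^+ 2) - (a * A + b * B) ^+ 2 =
  (a * B - b * A) ^+ 2 by ring.
exact: sqr_ge0.
Qed.

Lemma card_count_ord n (P : pred 'I_n) : #|P| = count P (enum 'I_n).
Proof.
rewrite cardE /enum_mem size_filter /enum_mem count_filter.
by apply: eq_count => x /=; rewrite andbT unfold_in.
Qed.

Lemma sorted_count (R : realType) (l : seq R) k :
  sorted (fun a b : R => b <= a) l -> nth 0 l k <= 0 ->
  (count (fun a : R => (0 < a)%R) l <= k)%N.
Proof.
elim: l k => [|a l IH] k //= spl.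
have sl : sorted (fun a b : R => b <= a) l by exact: path_sorted spl.
case: k => [|k] /= hk.
  have hall := order_path_min (fun y x z (h1 : y <= x) (h2 : z <= y) => le_trans h2 h1) spl.
  rewrite (le_gtF hk) add0n leqn0 eqn0Ngt -has_count; apply/hasPn => b bl.
  by rewrite -leNgt; apply: le_trans (allP hall b bl) hk.
apply: leq_trans (leq_add (leq_b1 _) (IH k sl hk)) _.
by rewrite add1n.
Qed.

Lemma Ms_ge0 (R : realType) n s (x : 'rV[R]_n) : 0 <= Ms s x.
Proof.
rewrite /Ms; set srt := sort _ _.
case: (ltnP s.-1 (size srt)) => h; last by rewrite nth_default.
have : nth 0 srt s.-1 \in srt by exact: mem_nth.
rewrite mem_sort => /mapP [i _ ->]; exact: normr_ge0.
Qed.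

Lemma Ms_attained (R : realType) n s (x : 'rV[R]_n) :
  (0 < s)%N -> (s <= l0 x)%N -> exists i, x 0 i != 0 /\ `|x 0 i| = Ms s x.
Proof.
move=> s0 sl; rewrite /Ms; set L := [seq _ | _ <- _]; set srt := sort _ L.
have szL : size srt = n by rewrite size_sort size_map size_enum_ord.
have ln : (l0 x <= n)%N by rewrite /l0 -[X in (_ <= X)%N]card_ord max_card.
have h : (s.-1 < size srt)%N by rewrite szL; apply: leq_trans ln; rewrite prednK.
have : nth 0 srt s.-1 \in srt by exact: mem_nth.
rewrite mem_sort => /mapP [i _ hi]; exists i; split; last by rewrite hi.
apply/negP => /eqP xi0.
have : (count (fun a : R => (0 < a)%R) srt <= s.-1)%N.
  apply: sorted_count; first by apply: sort_sorted => a b; exact: le_total.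
  by rewrite hi xi0 normr0.
have -> : count (fun a : R => (0 < a)%R) srt = l0 x.
  rewrite (permP (permEl (perm_sort _ L))) count_map /l0 card_count_ord.
  by apply: eq_count => k /=; rewrite normr_gt0.
by move=> H; move: (leq_trans sl H); rewrite -ltnS prednK // ltnn.
Qed.

Lemma partial_lin (R : realType) n (f : 'rV[R]_n -> R) y (i j : 'I_n) (a b : R) :
  differentiable f y ->
  'D_(a *: evec R i + b *: evec R j) f y = a * partial f i y + b * partial f j y.
Proof.
move=> df; rewrite deriveE // linearD !linearZ /= /partial !deriveE //.
Qed.

Lemma phi_is_derive (R : realType) n (f : 'rV[R]_n -> R) (x d : 'rV[R]_n) (u : R) :
  (forall y, differentiable f y) ->
  is_derive u 1 (fun u : R => f (x + u *: d)) ('D_d f (x + u *: d)).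
Proof.
move=> df.
have E : (fun h : R => h^-1 *: (((fun u : R => f (x + u *: d)) \o shift u) (h *: 1)
                               - f (x + u *: d))) =
         (fun h : R => h^-1 *: ((f \o shift (x + u *: d)) (h *: d) - f (x + u *: d))).
  apply/funext => h /=; congr (_ *: (f _ - _)).
  by rewrite /shift /= -[h%:A]/(h * 1) mulr1 scalerDl addrCA.
split; first by rewrite /derivable E; exact: diff_derivable.
by rewrite /derive E.
Qed.

Lemma poly_is_derive (R : realType) (c q u : R) :
  is_derive u 1 (fun v : R => v * c + v ^+ 2 * q) (c + 2 * u * q).
Proof.
change (is_derive u 1 ((@id R) * cst c + (@id R) ^+ 2 * cst q) (c + 2 * u * q)).
apply: is_derive_eq.
rewrite !scaler0 !add0r /cst /= expr1.
rewrite -[c%:A]/(c * 1) -[(2 * u)%:A]/((2 * u) * 1).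
rewrite -[_ *: (_ * 1)]/(q * ((2 * u) * 1)).
by rewrite !mulr1 mulrC.
Qed.

Lemma descent (R : realType) n (f : 'rV[R]_n -> R) (L2 : R) (x : 'rV[R]_n)
   (i j : 'I_n) (a b : R) :
  (forall y, differentiable f y) -> L2_bound f L2 -> i != j ->
  f (x + (a *: evec R i + b *: evec R j)) <=
  f x + (a * partial f i x + b * partial f j x) + L2 / 2 * (a ^+ 2 + b ^+ 2).
Proof.
move=> df hL ij.
set d := a *: evec R i + b *: evec R j.
set c := a * partial f i x + b * partial f j x.
set q := L2 / 2 * (a ^+ 2 + b ^+ 2).
pose phi := fun u : R => f (x + u *: d).
pose g := fun v : R => v * c + v ^+ 2 * q.
pose psi := fun u : R => phi u - g u.
have dpsi : forall u : R, is_derive u 1 psi ('D_d f (x + u *: d) - (c + 2 * u * q)).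
  move=> u; rewrite /psi.
  have h1 := phi_is_derive _ _ _ x d u df.
  have h2 := poly_is_derive _ c q u.
  exact: (is_deriveB (f := phi) (g := g)).
have cpsi : {within `[(0:R), 1], continuous psi}%classic.
  apply: continuous_subspaceT => u.
  apply: differentiable_continuous; apply/derivable1_diffP.
  by have [] := dpsi u.
have [c0 c0in] := MVT_segment ler01 (fun u _ => dpsi u) cpsi.
have c0ge : 0 <= c0 by move: c0in; rewrite in_itv /= => /andP[].
rewrite /psi /phi /g /= !scale0r !addr0 scale1r !mul0r expr0n /= mul0r addr0 subr0.
rewrite mul1r expr1n mul1r subr0 mulr1.
have key : 'D_d f (x + c0 *: d) - c <= 2 * c0 * q.
  rewrite partial_lin // /c.
  have -> : a * partial f i (x + c0 *: d) + b * partial f j (x + c0 *: d) -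
      (a * partial f i x + b * partial f j x) =
      a * (partial f i (x + c0 *: d) - partial f i x) +
      b * (partial f j (x + c0 *: d) - partial f j x) by ring.
  apply: le_trans (cs2 _ _ _ _ _) _.
  have dc : c0 *: d = (c0 * a) *: evec R i + (c0 * b) *: evec R j.
    by rewrite /d scalerDr !scalerA.
  have hb := hL i j ij x (c0 *: d) (eq_ind_r (fun z => (l0 z <= 2)%N) (l0_2 _ _ _ _ _ _) dc).
  rewrite /norm_grad_ij_diff in hb.
  rewrite (_ : (partial f i (x + c0 *: d) - partial f i x) ^+ 2 +
     (partial f j (x + c0 *: d) - partial f j x) ^+ 2 =
     (partial f i x - partial f i (x + c0 *: d)) ^+ 2 +
     (partial f j x - partial f j (x + c0 *: d)) ^+ 2); last by ring.
  apply: le_trans (ler_wpM2l (sqrtr_ge0 _) hb) _.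
  rewrite dc enorm2 // !exprMn -mulrDr sqrtrM ?sqr_ge0 // sqrtr_sqr ger0_norm //.
  set S := Num.sqrt (a ^+ 2 + b ^+ 2).
  have S2 : S ^+ 2 = a ^+ 2 + b ^+ 2.
    by rewrite sqr_sqrtr // addr_ge0 // sqr_ge0.
  rewrite /q -S2.
  have -> : S * (L2 * (c0 * S)) = 2 * c0 * (L2 / 2 * S ^+ 2) by field.
  by [].
move=> E.
have h : 'D_d f (x + c0 *: d) - (c + 2 * c0 * q) <= 0 by lra.
rewrite -E in h; lra.
Qed.

Lemma coord_min_zero (R : realType) n (f : 'rV[R]_n -> R) (L2 : R) (x : 'rV[R]_n)
   (j k : 'I_n) :
  (forall y, differentiable f y) -> L2_bound f L2 -> 0 <= L2 -> j != k ->
  (forall t, f x <= f (x + t *: evec R j)) -> partial f j x = 0.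
Proof.
move=> df hL L0 jk hmin.
suff : `|partial f j x| <= L2 * `|0 : R| by rewrite normr0 mulr0 normr_le0 => /eqP.
apply: alg_bound => // t.
have h1 := descent _ _ f L2 x j k t 0 df hL jk.
have h2 := hmin t.
have z : (0:R) ^+ 2 = 0 by rewrite expr2 mulr0.
rewrite scale0r addr0 mul0r addr0 z addr0 in h1.
rewrite z add0r mulrC; lra.
Qed.

Lemma swap_bound (R : realType) n (f : 'rV[R]_n -> R) (L2 : R) (x : 'rV[R]_n)
   (i j : 'I_n) (a : R) :
  (forall y, differentiable f y) -> L2_bound f L2 -> 0 <= L2 -> i != j ->
  partial f i x = 0 ->
  (forall t, f x <= f (x + (a *: evec R i + t *: evec R j))) ->
  `|partial f j x| <= L2 * `|a|.
Proof.
move=> df hL L0 ij pi0 hmin.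
apply: alg_bound => // t.
have h1 := descent _ _ f L2 x i j a t df hL ij.
have h2 := hmin t.
rewrite pi0 mulr0 add0r in h1.
rewrite mulrC; lra.
Qed.

Lemma l0_mono (R : realType) n (x y : 'rV[R]_n) :
  (forall i, x 0 i != 0 -> y 0 i != 0) -> (l0 x <= l0 y)%N.
Proof.
move=> h; apply: subset_leq_card; apply/fintype.subsetP => i; rewrite !inE; exact: h.
Qed.

Lemma l0_lt (R : realType) n (x y : 'rV[R]_n) :
  (l0 x < l0 y)%N -> exists i, y 0 i != 0 /\ x 0 i = 0.
Proof.
move=> h; apply: contrapT => H.
have : (l0 y <= l0 x)%N.
  apply: l0_mono => i yi; apply/negP => /eqP xi.
  by apply: H; exists i; split.
by rewrite leqNgt h.
Qed.

Lemma h_cont (R : realType) n (i j : 'I_n) (t : R) (z : 'rV[R]_n) :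
  {for z, continuous (fun y : 'rV[R]_n => y - y 0 i *: evec R i + t *: evec R j)}.
Proof.
apply: (@continuousD _ _ _ (fun y : 'rV[R]_n => y - y 0 i *: evec R i) (fun _ => t *: evec R j)); last exact: cst_continuous.
apply: (@continuousB _ _ _ id (fun y : 'rV[R]_n => y 0 i *: evec R i)); first exact: cvg_id.
apply: (@continuousZr_tmp _ _ _ (fun y : 'rV[R]_n => y 0 i)); exact: coord_continuous.
Qed.

Lemma near_pos (R : realType) n (z : 'rV[R]_n) (i : 'I_n) : z 0 i != 0 ->
  \forall y \near z, (y : 'rV[R]_n) 0 i != 0.
Proof.
move=> zi.
have := (cvgrPdist_lt _ _).1 (@coord_continuous R 1 n 0 i z) `|z 0 i|.
rewrite normr_gt0 => /(_ _ zi).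
apply: filterS => y h; apply/eqP => y0; move: h; rewrite y0 subr0 ltxx.
by [].
Qed.

Lemma acc_near (R : realType) n (xs : nat -> 'rV[R]_n) (xstar : 'rV[R]_n)
   (P : 'rV[R]_n -> Prop) :
  accumulation_point xs xstar -> (\forall y \near xstar, P y) ->
  forall N, exists k, (N <= k)%N /\ P (xs k).
Proof.
move=> acc /nbhs_normP [e e0 hb] N.
have [k [Nk hk]] := acc e e0 N.
exists k; split => //; apply: hb => /=.
rewrite distrC; apply: le_lt_trans hk; exact: norm_le_enorm.
Qed.

Lemma step_facts (R : realType) n (f : 'rV[R]_n -> R) s (x x' : 'rV[R]_n) :
  greedy_step f s x x' ->
  [/\ f x' <= f x,
      (l0 x < s)%N -> forall j t, f x' <= f (x + t *: evec R j) &
      ~~ (l0 x < s)%N -> forall i j t, x 0 i != 0 ->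
          f x' <= f (x - x 0 i *: evec R i + t *: evec R j)].
Proof.
rewrite /greedy_step; case: ifP => hs.
  case=> [[i [t [h1 [h2 [h3 ->]]]]]|[h1 ->]].
    split; first exact: ltW.
      by move=> _ j t'; exact: h2.
    by [].
  split => //.
case=> [[i [j [t [xi [h1 [h2 [h3 ->]]]]]]]|[h1 ->]].
  split; first exact: ltW.
    by [].
  by move=> _ i' j' t' xi'; exact: h2.
split => //.
Qed.

Theorem corollary3p2 (R : realType) (n s : nat) (f : 'rV[R]_n -> R) (L2 : R)
    (xs : nat -> 'rV[R]_n) (xstar : 'rV[R]_n) :
  (forall x, differentiable f x) ->
  (forall i : 'I_n, continuous (partial f i)) ->
  (exists L : R, forall x y, enorm (grad f x - grad f y) <= L * enorm (x - y)) ->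
  (exists m : R, forall x, m <= f x) ->
  (0 < s)%N -> (s < n)%N ->
  L2_bound f L2 ->
  greedy_seq f s xs ->
  accumulation_point xs xstar ->
  L_stationary f s L2 xstar.
Proof.
move=> df _ _ _ s0 sn hL [_ hstep] acc.
have fc : forall z, {for z, continuous f}.
  by move=> z; exact: differentiable_continuous.
have n1 : (1 < n)%N by apply: leq_ltn_trans sn.
have n0 : (0 < n)%N by apply: ltnW.
pose i0 : 'I_n := Ordinal n0.
pose i1 : 'I_n := Ordinal n1.
have i01 : i0 != i1 by [].
have other : forall i : 'I_n, exists k, i != k.
  move=> i; case: (eqVneq i i0) => [->|h]; first by exists i1.
  by exists i0.
have L0 : 0 <= L2.
  have h := hL i0 i1 i01 0 (1 *: evec R i0 + 0 *: evec R i1) (l0_2 _ _ _ _ _ _).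
  move: h; rewrite enorm2 // expr1n expr0n /= addr0 sqrtr1 mulr1.
  apply: le_trans; exact: sqrtr_ge0.
have dec : forall k, f (xs k.+1) <= f (xs k).
  by move=> k; case: (step_facts _ _ _ _ _ _ (hstep k)).
have mono : forall k m, (k <= m)%N -> f (xs m) <= f (xs k).
  move=> k m /subnK <-; elim: (m - k)%N => [|p IH]; first by rewrite add0n.
  by rewrite addSn; apply: le_trans (dec _) IH.
have F3 : forall k, f xstar <= f (xs k).
  move=> k; rewrite leNgt; apply/negP => hlt.
  have nr : \forall y \near xstar, f (xs k) < f y by apply: cvgr_gt (fc xstar) _ hlt.
  have [m [km hm]] := acc_near _ _ xs xstar _ acc nr k.
  by move: (mono k m km); rewrite leNgt hm.
have SA : forall k, (l0 (xs k) < s)%N -> forall j t,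
    f xstar <= f (xs k + t *: evec R j).
  move=> k h j t; apply: le_trans (F3 k.+1) _.
  by case: (step_facts _ _ _ _ _ _ (hstep k)) => _ H _; exact: H.
have SB : forall k, ~~ (l0 (xs k) < s)%N -> forall i j t, xs k 0 i != 0 ->
    f xstar <= f (xs k - xs k 0 i *: evec R i + t *: evec R j).
  move=> k h i j t xi; apply: le_trans (F3 k.+1) _.
  by case: (step_facts _ _ _ _ _ _ (hstep k)) => _ _ H; exact: H.
case: (ltnP (l0 xstar) s) => hs.
  have cmin : forall j t, f xstar <= f (xstar + t *: evec R j).
    move=> j t; rewrite leNgt; apply/negP => hlt.
    have c1 : {for xstar, continuous (fun y : 'rV[R]_n => y + t *: evec R j)}.
      apply: (@continuousD _ _ _ id (fun _ => t *: evec R j)); last exact: cst_continuous.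
      exact: cvg_id.
    have nr1 : \forall y \near xstar, f (y + t *: evec R j) < f xstar.
      exact: cvgr_lt (continuous_comp c1 (fc _)) _ hlt.
    have nr2 : \forall y \near xstar, forall i, xstar 0 i = 0 ->
        f ((y : 'rV[R]_n) - y 0 i *: evec R i + t *: evec R j) < f xstar.
      apply: (@filter_forall _ _ (fun i (y : 'rV[R]_n) => xstar 0 i = 0 ->
        f (y - y 0 i *: evec R i + t *: evec R j) < f xstar) (nbhs xstar) _).
      move=> i; case: (eqVneq (xstar 0 i) 0) => hi.
        have hlt' : f (xstar - xstar 0 i *: evec R i + t *: evec R j) < f xstar.
          by rewrite hi scale0r subr0.
        have HH : \forall y \near xstar, f ((y : 'rV[R]_n) - y 0 i *: evec R i + t *: evec R j) < f xstar.
          exact: cvgr_lt (continuous_comp (h_cont _ _ i j t xstar) (fc _)) _ hlt'.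
        apply: (filterS _ HH).
        by move=> y hy _; exact: hy.
      by apply: nearW => y h; move: hi; rewrite h eqxx.
    have [k [_ [hk1 hk2]]] := acc_near _ _ xs xstar _ acc (filterI nr1 nr2) 0%N.
    case: (ltnP (l0 (xs k)) s) => hk.
      by move: (SA k hk j t); rewrite leNgt hk1.
    have [i [yi xi]] := l0_lt _ _ xstar (xs k) (leq_trans hs hk).
    have nk : ~~ (l0 (xs k) < s)%N by rewrite -leqNgt.
    by move: (SB k nk i j t yi); rewrite leNgt hk2.
  have g0 : forall j, partial f j xstar = 0.
    move=> j; have [k jk] := other j.
    exact: (coord_min_zero _ _ f L2 xstar j k df hL L0 jk (cmin j)).
  move=> i; split; first by move=> _; exact: g0.
  by move=> _; rewrite g0 normr0; exact: mulr_ge0 L0 (Ms_ge0 _ _ _ _).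
have B1 : forall i j t, xstar 0 i != 0 ->
    f xstar <= f (xstar - xstar 0 i *: evec R i + t *: evec R j).
  move=> i j t xi; rewrite leNgt; apply/negP => hlt.
  have nr1 : \forall y \near xstar, f ((y : 'rV[R]_n) - y 0 i *: evec R i + t *: evec R j) < f xstar.
    exact: cvgr_lt (continuous_comp (h_cont _ _ i j t xstar) (fc _)) _ hlt.
  have nr2 : \forall y \near xstar, forall i', xstar 0 i' != 0 -> (y : 'rV[R]_n) 0 i' != 0.
    apply: (@filter_forall _ _ (fun i' (y : 'rV[R]_n) => xstar 0 i' != 0 -> y 0 i' != 0) (nbhs xstar) _).
    move=> i'; case: (eqVneq (xstar 0 i') 0) => hi'.
      by apply: nearW => y.
    by apply: (filterS _ (near_pos _ _ _ _ hi')) => y hy _.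
  have [k [_ [hk1 hk2]]] := acc_near _ _ xs xstar _ acc (filterI nr1 nr2) 0%N.
  have hk : (s <= l0 (xs k))%N := leq_trans hs (l0_mono _ _ _ _ hk2).
  have nk : ~~ (l0 (xs k) < s)%N by rewrite -leqNgt.
  by move: (SB k nk i j t (hk2 i xi)); rewrite leNgt hk1.
have gS : forall i, xstar 0 i != 0 -> partial f i xstar = 0.
  move=> i xi; have [k ik] := other i.
  apply: (coord_min_zero _ _ f L2 xstar i k df hL L0 ik) => t.
  have := B1 i i (t + xstar 0 i) xi.
  by rewrite scalerDl addrCA subrK addrC.
move=> j; split; first exact: gS j.
move=> xj; have [i [xi hi]] := Ms_attained _ _ s xstar s0 hs.
have ij : i != j by apply: contraNneq xi => ->; rewrite xj.
rewrite -hi -[`|xstar 0 i|]normrN.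
apply: (swap_bound _ _ f L2 xstar i j (- xstar 0 i) df hL L0 ij (gS i xi)) => t.
by have := B1 i j t xi; rewrite scaleNr addrA.
Qed.
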